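(* Let $\Omega$ be a finite set, $\mathcal C$ the set of all functions from the power set of $\Omega$ to $\mathbb R$, $\mathcal P\subseteq\mathcal C$ the set of probability functions, $M$ finite, and let $s:\mathcal C\to[-\infty,M]^\Omega$ be a scoring rule that is quasi-strictly proper and continuous on $\mathcal C$. Then either $E_p s(p)$ is infinite for some $p\in\mathcal P$, or both: (i) for any sequence $(p_n)$ in $\mathcal P$ converging to some $p\in\mathcal P$ such that $s(p_n)$ is finite for all $n$ while $s(p)$ is not finite, $\lim_n E_{p_n}s(p_n)=E_p s(p)$; and (ii) the set $F=s[\mathcal P]\cap\mathbb R^\Omega$ of finite scores of probabilities is dense in $\partial^+\operatorname{Conv}F$.
   Context: $\mathcal C$ is topologized as $\mathbb R^{2^\Omega}$ and $[-\infty,M]^\Omega$ with the product of the usual extended-real topology. For $p\in\mathcal P$ and $f:\Omega\to[-\infty,\infty]$, $E_p f=\sum_{\omega:\,p(\{\omega\})\neq0}p(\{\omega\})f(\omega)$. $s$ is proper if $E_p s(p)\ge E_p s(c)$ for all $p\in\mathcal P$, $c\in\mathcal C$; quasi-strictly proper if moreover the inequality is strict whenever $c\in\mathcal C\setminus\mathcal P$. A score is finite if all its values are finite. $\mathcal P$ carries the topology in which $p_n\to p$ iff $p_n(\{\omega\})\to p(\{\omega\})$ for every $\omega$. With $\langle f,g\rangle=\sum_\omega f(\omega)g(\omega)$ on $\mathbb R^\Omega$, a boundary point $z$ of $G\subseteq\mathbb R^\Omega$ is positive-facing if there exists $v\in(0,\infty)^\Omega$ with $\langle v,w\rangle\le\langle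 v,z\rangle$ for all $w\in G$; $\partial^+G$ denotes the set of such points. $\operatorname{Conv}F$ is the convex hull of $F$; $F$ dense in $B$ means every open set meeting $B$ meets $F$. *)

(* Defs.v *)
From HB Require Import structures.
From mathcomp Require Import all_boot all_order all_algebra.
From mathcomp Require Import all_classical all_reals all_analysis.
Set Implicit Arguments. Unset Strict Implicit. Unset Printing Implicit Defensive.
Import Order.TTheory GRing.Theory Num.Theory.
Import numFieldNormedType.Exports.
Local Open Scope ring_scope.

Section Defs.
Variables (R : realType) (Omega : finType).


Definition is_prob (p : {set Omega} -> R) : Prop :=
  [/\ forall A, 0 <= p A,
      p [set: Omega] = 1 &
      forall A B : {set Omega}, [disjoint A & B] -> p (A :|: B) = p A + p B].

Local Open Scope classical_set_scope.

Definition expect (p : {set Omega} -> R) (f : Omega -> \bar R) : \bar R :=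
  (\sum_(w : Omega | p [set w]%SET != 0%R) (p [set w]%SET)%:E * f w)%E.

Definition finite_score (f : Omega -> \bar R) : Prop :=
  forall w, f w \is a fin_num.

Definition dotp (f g : Omega -> R) : R := \sum_w f w * g w.

Definition conv_hull (F : set {ptws Omega -> R}) : set {ptws Omega -> R} :=
  [set z | exists (n : nat) (l : 'I_n -> R) (x : 'I_n -> (Omega -> R)),
     [/\ forall i, 0 <= l i, \sum_i l i = 1, forall i, F (x i) &
         z = fun w => \sum_i l i * x i w]].

Definition boundary (G : set {ptws Omega -> R}) : set {ptws Omega -> R} :=
  closure G `\` interior G.

Definition pos_boundary (G : set {ptws Omega -> R}) : set {ptws Omega -> R} :=
  [set z | boundary G z /\
     exists v : Omega -> R, (forall w, 0 < v w) /\
       (forall x, G x -> dotp v x <= dotp v z)].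

Definition dense_in (F B : set {ptws Omega -> R}) : Prop :=
  forall O, open O -> O `&` B !=set0 -> O `&` F !=set0.

End Defs.

(* Main.v *)
Require Import Defs.
From HB Require Import structures.
From mathcomp Require Import all_boot all_order all_algebra.
From mathcomp Require Import all_classical all_reals all_analysis.
From mathcomp Require Import ring lra.
Import Order.TTheory GRing.Theory Num.Theory.
Import numFieldNormedType.Exports.
Local Open Scope classical_set_scope.
Local Open Scope ring_scope.

Lemma ptws_cvg (I : eqType) (K : topologicalType) (T : Type) (F : set_system T) (FF : Filter F)
  (g : T -> {ptws I -> K}) (f : {ptws I -> K}) :
  (forall i, (fun t => g t i) @ F --> f i) -> g @ F --> f.
Proof.
move=> H. apply/cvg_sup => i U [V] [[W] oW <-] WfN WU.
apply: (filterS WU). rewrite nbhs_simpl.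
have := H i W. rewrite nbhs_simpl. apply. exact: open_nbhs_nbhs.
Qed.

Lemma ptws_cvg_proj (I : eqType) (K : topologicalType) (T : Type) (F : set_system T) (FF : Filter F)
  (g : T -> {ptws I -> K}) (f : {ptws I -> K}) i :
  g @ F --> f -> (fun t => g t i) @ F --> f i.
Proof.
move=> gf.
have := @proj_continuous I (fun _ => K) i f.
move=> pc. apply: cvg_trans pc. exact: cvg_app gf.
Qed.

Lemma cvg_sumr (R : realType) (I : Type) (T : Type) (F : set_system T) (FF : Filter F)
  (r : seq I) (P : pred I) (f : I -> T -> R) (a : I -> R) :
  (forall i, P i -> f i @ F --> a i) ->
  (fun x => \sum_(i <- r | P i) f i x) @ F --> \sum_(i <- r | P i) a i.
Proof.
move=> H; apply: (@cvg_big R^o I +%R 0 P _ _ F r f a FF H).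
exact: add_continuous.
Qed.

Lemma expect_fin (R : realType) (Omega : finType) (p : {set Omega} -> R) (f : Omega -> \bar R) :
  (forall w, p [set w]%SET != 0 -> f w \is a fin_num) ->
  expect p f = (\sum_w p [set w]%SET * fine (f w))%:E.
Proof.
move=> H; rewrite /expect.
rewrite (eq_bigr (fun w => (p [set w]%SET * fine (f w))%:E)); last first.
  by move=> w /H fw; rewrite EFinM fineK.
rewrite sumEFin; congr (_%:E).
rewrite big_mkcond /=; apply: eq_bigr => w _.
by case: eqP => [->|//]; rewrite mul0r.
Qed.

Lemma prob_sum (R : realType) (Omega : finType) (p : {set Omega} -> R) :
  is_prob p -> forall A, p A = \sum_(w in A) p [set w]%SET.
Proof.
case=> p0 pT padd.
have pe : p finset.set0 = 0.
  have := padd finset.set0 finset.set0 ltac:(by rewrite finset.disjoints_subset finset.sub0set); rewrite finset.setU0 => h; lra.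
move=> A; move: {2}#|A| (erefl #|A|) => n; elim: n A => [|n IH] A hA.
  by move/eqP: hA; rewrite cards_eq0 => /eqP ->; rewrite big_set0.
have [x xA] : exists x, x \in A by apply/card_gt0P; rewrite hA.
rewrite (big_setD1 x xA) /= -(IH (A :\ x)); last first.
  by move: hA; rewrite (cardsD1 x A) xA add1n => -[].
rewrite -(padd [set x]%SET (A :\ x)) ?setD1K //.
  by rewrite finset.setD1K.
by rewrite disjoints1 !inE eqxx.
Qed.

Lemma prob_weights (R : realType) (Omega : finType) (u : Omega -> R) :
  (forall w, 0 <= u w) -> \sum_w u w = 1 ->
  is_prob (fun A : {set Omega} => \sum_(w in A) u w).
Proof.
move=> u0 u1; split.
- by move=> A; apply: sumr_ge0.
- by rewrite -u1; apply: eq_bigl => w; rewrite inE.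
- by move=> A B dAB; rewrite -bigU //=; apply: eq_bigl => w; rewrite !inE.
Qed.

Lemma weights_set1 (R : realType) (Omega : finType) (u : Omega -> R) w :
  (fun A : {set Omega} => \sum_(w in A) u w) [set w]%SET = u w.
Proof. by rewrite /= big_set1. Qed.

Lemma dot_cont (R : realType) (Omega : finType) (r : Omega -> R) :
  continuous (fun y : {ptws Omega -> R} => \sum_w r w * y w).
Proof.
move=> y0.
have FF : Filter (nbhs y0) by exact: nbhs_filter.
have h : forall w, (fun y : {ptws Omega -> R} => y w) @ y0 --> y0 w.
  move=> w; exact: (@ptws_cvg_proj _ _ _ _ FF id y0 w cvg_id).
have hs : forall w, (fun y : {ptws Omega -> R} => r w * y w) @ y0 --> r w * y0 w.
  move=> w; exact: cvgMr (h w).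
have := (@cvg_sumr R Omega _ (nbhs y0) FF (index_enum Omega) xpredT (fun w y => r w * y w) (fun w => r w * y0 w) (fun w _ => hs w)).
move=> HH. exact: HH.
Qed.

Lemma dot_closed (R : realType) (Omega : finType) (r : Omega -> R) (c : R) :
  closed ((fun y : {ptws Omega -> R} => \sum_w r w * y w) @^-1` [set x | x <= c]).
Proof.
have cf := @dot_cont _ _ r.
have cl : closed [set x : R | x <= c] by exact: closed_le.
have := @preimage_closed _ R (fun y : {ptws Omega -> R} => \sum_w r w * y w) [set x | x <= c].
move=> HH. apply: HH => //.
Qed.

Lemma sum_delta (R : realType) (Omega : finType) (a : Omega) (y : Omega -> R) :
  \sum_w (w == a)%:R * y w = y a.
Proof.
rewrite (bigD1 a) //= eqxx mul1r big1 ?addr0 // => w /negbTE ->.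
by rewrite mul0r.
Qed.

Theorem proposition2 (R : realType) (Omega : finType) (M : R)
  (s : {ptws {set Omega} -> R} -> {ptws Omega -> \bar R})
  (s_le_M : forall c w, (s c w <= M%:E)%E)
  (s_proper : forall (p c : {ptws {set Omega} -> R}), is_prob p ->
     (expect p (s c) <= expect p (s p))%E)
  (s_quasi_strict : forall (p c : {ptws {set Omega} -> R}), is_prob p -> ~ is_prob c ->
     (expect p (s c) < expect p (s p))%E)
  (s_cont : continuous s) :
  (exists p : {ptws {set Omega} -> R}, is_prob p /\ ~ (expect p (s p) \is a fin_num)) \/
  ((forall (pn : nat -> {ptws {set Omega} -> R}) (p : {ptws {set Omega} -> R}),
      (forall n, is_prob (pn n)) -> is_prob p ->
      (forall w, (fun n => pn n [set w]%SET) @ \oo --> p [set w]%SET) ->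
      (forall n, finite_score (s (pn n))) -> ~ finite_score (s p) ->
      (fun n => expect (pn n) (s (pn n))) @ \oo --> expect p (s p)) /\
   (let F : set {ptws Omega -> R} :=
      [set f | exists p : {ptws {set Omega} -> R}, [/\ is_prob p, finite_score (s p) &
                 f = (fun w => fine (s p w))]] in
    dense_in F (pos_boundary (conv_hull F)))).
Proof.
right.
have c0np : ~ is_prob (fun _ : {set Omega} => 0 : R).
  by case=> _ /eqP; rewrite eq_sym oner_eq0.
have pge0 : forall (p : {ptws {set Omega} -> R}) w, is_prob p -> 0 <= p [set w]%SET.
  by move=> p w [].
have key : forall p : {ptws {set Omega} -> R}, is_prob p ->
    forall w, p [set w]%SET != 0 -> s p w \is a fin_num.
  move=> p pp w pw0.
  have hlt := s_quasi_strict p (fun _ => 0) pp c0np.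
  have hNy : (expect p (s p) != -oo)%E.
    by apply/eqP => e; move: hlt; rewrite e ltNge leNye.
  move: hNy; rewrite /expect esum_eqNy => /existsPn /(_ w).
  rewrite unfold_in pw0 /=.
  have pwpos : 0 < p [set w]%SET by rewrite lt0r pw0 pge0.
  have := s_le_M p w.
  case: (s p w) => [r| |] //=.
  by rewrite gt0_muleNy ?lte_fin // eqxx.
pose G (p : {ptws {set Omega} -> R}) := \sum_w p [set w]%SET * fine (s p w).
have EG : forall p, is_prob p -> expect p (s p) = (G p)%:E.
  by move=> p pp; apply: expect_fin; exact: key.
have Efin : forall p c, finite_score (s c) ->
    expect p (s c) = (\sum_w p [set w]%SET * fine (s c w))%:E.
  by move=> p c fc; apply: expect_fin => w _; exact: fc.
have prop : forall p c, is_prob p -> finite_score (s c) ->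
    \sum_w p [set w]%SET * fine (s c w) <= G p.
  by move=> p c pp fc; have := s_proper p c pp; rewrite EG // Efin // lee_fin.
have finM : forall c w, s c w \is a fin_num -> fine (s c w) <= M.
  by move=> c w fw; rewrite -lee_fin fineK.
split.
{ move=> pn p pnp pp pncvg pnfin _.
  pose a n w := fine (s (pn n) w).
  have pnptws : pn n @[n --> \oo] --> p.
    apply: ptws_cvg => A; rewrite (@prob_sum _ _ _ pp A).
    have -> : (fun n => pn n A) = (fun n => \sum_(w in A) pn n [set w]%SET).
      by apply: funext => n; rewrite (@prob_sum _ _ _ (pnp n) A).
    by apply: cvg_sumr => w _; exact: pncvg.
  have scvg : forall w, (fun n => s (pn n) w) @ \oo --> s p w.
    move=> w; have h : (fun n => s (pn n)) @ \oo --> s p.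
      by apply: cvg_trans (s_cont p); exact: cvg_app pnptws.
    by move/(@ptws_cvg_proj _ _ _ _ _ _ _ w): h.
  have acvg : forall w, p [set w]%SET != 0 -> a ^~ w @ \oo --> fine (s p w).
    move=> w pw; apply: fine_cvg; rewrite fineK ?key //; exact: scvg.
  have termcvg : forall (c : nat -> Omega -> R) (d : Omega -> R),
      (forall w, p [set w]%SET != 0 -> c ^~ w @ \oo --> d w) ->
      (fun n => \sum_w p [set w]%SET * c n w) @ \oo --> \sum_w p [set w]%SET * d w.
    move=> c d H; apply: cvg_sumr => w _.
    have [->|pw] := eqVneq (p [set w]%SET) 0.
      rewrite mul0r; under eq_cvg do rewrite mul0r; exact: cvg_cst.
    exact: cvgMr (H w pw).
  rewrite EG //.
  have -> : (fun n => expect (pn n) (s (pn n))) = (fun n => (G (pn n))%:E).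
    by apply: funext => n; rewrite EG.
  apply: cvg_EFin; first exact: nearW.
  pose u n w := if p [set w]%SET == 0 then pn n [set w]%SET * M
                else (pn n [set w]%SET - p [set w]%SET) * a n w.
  have Ucvg : (fun n => G p + \sum_w u n w) @ \oo --> G p + \sum_(w : Omega) (0:R).
    apply: cvgD; first exact: cvg_cst.
    apply: cvg_sumr => w _; rewrite /u; case: eqP => [pw0|/eqP pw].
      rewrite -(mul0r M) -pw0; exact: cvgMl (pncvg w).
    rewrite -(mul0r (fine (s p w))) -(subrr (p [set w]%SET)).
    apply: cvgM; last exact: acvg.
    apply: cvgB; [exact: pncvg | exact: cvg_cst].
  rewrite big1_eq addr0 in Ucvg.
  have GU : forall n, G (pn n) <= G p + \sum_w u n w.
    move=> n.
    have -> : G (pn n) = \sum_w p [set w]%SET * a n w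
                       + \sum_w (pn n [set w]%SET - p [set w]%SET) * a n w.
      by rewrite -big_split /=; apply: eq_bigr => w _; rewrite /a; ring.
    apply: lerD; first exact: prop.
    apply: ler_sum => w _; rewrite /u; case: eqP => [->|_] //.
    rewrite subr0; apply: ler_wpM2l; first exact: pge0.
    exact/finM/pnfin.
  apply/cvgrPdist_le => e e0.
  have lower : \forall n \near \oo, G p - e <= G (pn n).
    have hm : (fun m => \sum_w p [set w]%SET * a m w) @ \oo --> G p := termcvg a _ acvg.
    have [N _ HN] := cvgr_ge _ hm (G p - e / 2) ltac:(lra).
    have hmN := HN N (leqnn N).
    have hk : (fun n => \sum_w pn n [set w]%SET * a N w) @ \oo
                --> \sum_w p [set w]%SET * a N w.
      by apply: cvg_sumr => w _; apply: cvgMl; exact: pncvg.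
    have := cvgr_ge _ hk (\sum_w p [set w]%SET * a N w - e / 2) ltac:(lra).
    apply: filterS => n hn.
    have := prop (pn n) (pn N) (pnp n) (pnfin N).
    rewrite /a in hmN hn; lra.
  have upper := cvgr_le _ Ucvg (G p + e) ltac:(lra).
  near=> n.
  have h1 : G p - e <= G (pn n) by near: n.
  have h2 : G p + \sum_w u n w <= G p + e by near: n.
  have h3 := GU n.
  rewrite /= ler_norml; apply/andP; split; lra.
Unshelve. all: by end_near. }

move=> F O oO [z [Oz [[zcl _] [v [vpos vz]]]]].
exists z; split => //.
have [w0 _] : exists w0 : Omega, true.
  have [x cx] : conv_hull F !=set0.
    have := zcl setT filterT; by case=> x [cx _]; exists x.
  case: cx => n [l [xs [l0 l1 Fx _]]].
  case: n l xs l0 l1 Fx => [|n] l xs l0 l1 Fx.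
    by move: l1; rewrite big_ord0 => /eqP; rewrite eq_sym oner_eq0.
  case: (Fx ord0) => p [pp _ _].
  case: (pickP (fun _ : Omega => true)) => [w0 _|h]; first by exists w0.
  have := @prob_sum _ _ _ pp [set: Omega]%SET; case: pp => _ -> _.
  rewrite big_pred0 => [/eqP|w]; first by rewrite oner_eq0.
  by have := h w.
pose V := \sum_w v w.
have V0 : 0 < V.
  rewrite /V (bigD1 w0) //=; apply: ltr_pwDl; first exact: vpos.
  by apply: sumr_ge0 => w _; exact/ltW/vpos.
pose qw w := v w / V.
have qpos : forall w, 0 < qw w by move=> w; apply: divr_gt0.
pose q : {ptws {set Omega} -> R} := fun A => \sum_(w in A) qw w.
have qprob : is_prob q.
  apply: prob_weights; first by move=> w; exact/ltW.
  by rewrite -mulr_suml mulfV // gt_eqF.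
have q1 : forall w, q [set w]%SET = qw w by move=> w; exact: weights_set1.
have qfin : finite_score (s q).
  by move=> w; apply: key => //; rewrite q1 gt_eqF.
have Fsub : F `<=` conv_hull F.
  move=> x Fxx; exists 1%N, (fun _ => 1), (fun _ => x); split => //.
  - by rewrite big_ord1.
  - by apply: funext => w; rewrite big_ord1 mul1r.
have F1 : forall r y, is_prob r -> closure (conv_hull F) y ->
    \sum_w r [set w]%SET * y w <= G r.
  move=> r y pr.
  pose f := fun y : {ptws Omega -> R} => \sum_w r [set w]%SET * y w.
  pose S := f @^-1` [set x | x <= G r].
  have cS : closed S := @dot_closed _ _ (fun w => r [set w]%SET) (G r).
  have sub : conv_hull F `<=` S.
    move=> x [n [l [xs [l0 l1 Fx ->]]]]; rewrite /S /f /=.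
    under eq_bigr do rewrite mulr_sumr.
    rewrite exchange_big /=.
    apply: (@le_trans _ _ (\sum_(i < n) l i * G r)); last by rewrite -mulr_suml l1 mul1r.
    apply: ler_sum => i _.
    have -> : \sum_w r [set w]%SET * (l i * xs i w) = l i * \sum_w r [set w]%SET * xs i w.
      by rewrite mulr_sumr; apply: eq_bigr => w _; rewrite mulrCA.
    apply: ler_wpM2l; first exact: l0.
    by case: (Fx i) => p [_ fp ->]; exact: prop.
  by move=> /(closureS sub); rewrite -(closure_id S).1.
have F2 : G q <= \sum_w q [set w]%SET * z w.
  have Fq : F (fun w => fine (s q w)) by exists q.
  have := vz _ (Fsub _ Fq).
  rewrite /dotp => h.
  rewrite /G; under eq_bigr do rewrite q1.
  under [X in _ <= X]eq_bigr do rewrite q1.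
  rewrite /qw; under eq_bigr do rewrite mulrAC.
  under [X in _ <= X]eq_bigr do rewrite mulrAC.
  by rewrite -!mulr_suml ler_pM2r ?invr_gt0.
pose aq w := fine (s q w).
have sum_qw : \sum_w qw w = 1 by rewrite -mulr_suml mulfV // gt_eqF.
have F3 : forall r, is_prob r -> finite_score (s r) -> \sum_w qw w * fine (s r w) <= G q.
  move=> r pr fr; have := prop q r qprob fr.
  by under eq_bigr do rewrite q1.
have zq : \sum_w qw w * z w <= G q.
  by have := F1 q z qprob zcl; under eq_bigr do rewrite q1.
have F2' : G q <= \sum_w qw w * z w.
  by move: F2; under eq_bigr do rewrite q1.
have sum_rw : forall (t : R) (a b : Omega) (y : Omega -> R),
    \sum_w (qw w + t * ((w == a)%:R - (w == b)%:R)) * y w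
    = \sum_w qw w * y w + t * (y a - y b).
  move=> t a b y.
  under eq_bigr do rewrite mulrDl.
  rewrite big_split /=; congr (_ + _).
  under eq_bigr do rewrite -mulrA mulrBl.
  by rewrite -mulr_sumr sumrB !sum_delta.
have D : forall a b, a != b -> z a - z b <= aq a - aq b.
{   move=> a b ab.
  pose rw (t : R) w := qw w + t * ((w == a)%:R - (w == b)%:R).
  pose r (t : R) : {ptws {set Omega} -> R} := fun A => \sum_(w in A) rw t w.
  have rpos : forall t w, 0 < t < qw b -> 0 < rw t w.
    move=> t w /andP[t0 tb]; rewrite /rw.
    have := qpos w.
    have [->|wa] := eqVneq w a.
      rewrite (negbTE ab) /=; lra.
    have [->|wb] := eqVneq w b.
      rewrite /=; lra.
    rewrite /=; lra.
  have rprob : forall t, 0 < t < qw b -> is_prob (r t).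
    move=> t ht; apply: prob_weights; first by move=> w; exact/ltW/rpos.
    rewrite (eq_bigr (fun w => rw t w * 1)); last by move=> w _; rewrite mulr1.
    rewrite /rw sum_rw subrr mulr0 addr0.
    by under eq_bigr do rewrite mulr1.
  have r1 : forall t w, r t [set w]%SET = rw t w by move=> t w; exact: weights_set1.
  have ineq : forall t, 0 < t < qw b ->
      z a - z b <= fine (s (r t) a) - fine (s (r t) b).
    move=> t ht; have /andP[t0 _] := ht.
    have rfin : finite_score (s (r t)).
      by move=> w; apply: (key _ (rprob t ht)); rewrite r1 gt_eqF // rpos.
    have h1 : \sum_w qw w * z w + t * (z a - z b) <=
        \sum_w qw w * fine (s (r t) w) + t * (fine (s (r t) a) - fine (s (r t) b)).
      rewrite -sum_rw -(sum_rw t a b (fun w => fine (s (r t) w))).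
      have := F1 (r t) z (rprob t ht) zcl; rewrite /G.
      under eq_bigr do rewrite r1.
      by under [X in _ <= X -> _]eq_bigr do rewrite r1.
    have h3 := F3 (r t) (rprob t ht) rfin.
    have : t * (z a - z b) <= t * (fine (s (r t) a) - fine (s (r t) b)) by lra.
    by rewrite ler_pM2l.
  have rcvg : r t @[t --> (0:R)] --> q.
    apply: ptws_cvg => A.
    have -> : q A = \sum_(w in A) (qw w + 0 * ((w == a)%:R - (w == b)%:R)).
      by apply: eq_bigr => w _; rewrite mul0r addr0.
    apply: cvg_sumr => w _; apply: cvgD; first exact: cvg_cst.
    apply: cvgMl; exact: cvg_id.
  have scvg : s (r t) @[t --> (0:R)] --> s q.
    by apply: cvg_trans (s_cont q); exact: cvg_app rcvg.
  have sw : forall w, fine (s (r t) w) @[t --> (0:R)] --> aq w.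
    move=> w; apply: fine_cvg; rewrite /aq fineK; last exact: qfin.
    by move/(@ptws_cvg_proj _ _ _ _ _ _ _ w): scvg.
  have phicvg : fine (s (r t) a) - fine (s (r t) b) @[t --> (0:R)] --> aq a - aq b.
    by apply: cvgB; exact: sw.
  have phicvg' := cvg_at_right_filter phicvg.
  have := limr_ge (cvgP _ phicvg').
  rewrite (cvg_lim _ phicvg') //; apply.
  near=> t; apply: ineq; apply/andP; split.
    by near: t; exact: nbhs_right_gt.
  by near: t; exact: nbhs_right_lt.
Unshelve. all: by end_near. }
have Dk : forall w w', aq w - z w = aq w' - z w'.
  move=> w w'; have [->//|ww] := eqVneq w w'.
  have := D w w' ww; have := D w' w ltac:(by rewrite eq_sym); lra.
exists q; split => //; apply: funext => w.
have e : \sum_w' qw w' * (aq w' - z w') = aq w - z w.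
  under eq_bigr do rewrite (Dk _ w).
  by rewrite -mulr_suml sum_qw mul1r.
have e2 : \sum_w' qw w' * (aq w' - z w') = G q - \sum_w' qw w' * z w'.
  rewrite /G; under [X in _ = X - _]eq_bigr do rewrite q1.
  by rewrite -sumrB; apply: eq_bigr => w' _; rewrite /aq; ring.
rewrite /aq in e; lra.
Qed.
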